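(* The maps $(\lambda,\mu)\mapsto z(\lambda,\mu)$, with inverse $\lambda=\frac{z_0-z_1}{z_2-1}=\frac{z_2+1}{z_0+z_1}$, $\mu=\frac{z_0-z_1}{z_2+1}=\frac{z_2-1}{z_0+z_1}$, define biholomorphic mappings from the tubes $\tau^{-,+}$ and $\tau^{+,-}$ onto $\mathcal T^+$ and $\mathcal T^-$ respectively, and from the pierced tubes $\tau^{+,+}\setminus\delta$ and $\tau^{-,-}\setminus\delta$ onto $\mathcal T_\leftarrow$ and $\mathcal T_\rightarrow$ respectively, where $\delta=\{(\lambda,\mu):\lambda=\mu\}$.
   Context: $[z\cdot z']=z_0z'_0-z_1z'_1-z_2z'_2$ on $\mathbb C^3$, $z^2=[z\cdot z]$; $X^{(c)}=\{z\in\mathbb C^3:z^2=-1\}$, $z=x+iy$; $V^+=\{y:y^2>0,y_0>0\}$, $V^-=-V^+$; $\mathcal T^\pm=\{z\in X^{(c)}:y\in V^\pm\}$; fix $e\in V^+$; $\mathcal T_\rightarrow=\{z\in X^{(c)}:y^2<0,{\rm sgn}\det(e,x,y)=-1\}$, $\mathcal T_\leftarrow$ the same with $+1$. For $(\lambda,\mu)\in\mathbb C^2$, $\lambda\ne\mu$: $z(\lambda,\mu)=\big(\frac{1+\lambda\mu}{\lambda-\mu},\frac{1-\lambda\mu}{\lambda-\mu},\frac{\lambda+\mu}{\lambda-\mu}\big)$. For signs $\varepsilon,\varepsilon'$: $\tau^{\varepsilon,\varepsilon'}=\{(\lambda,\mu)\in\mathbb C^2:\varepsilon{\rm Im}\lambda>0,\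 \varepsilon'{\rm Im}\mu>0\}$. *)

(* Defs.v *)
From HB Require Import structures.
From mathcomp Require Import all_boot all_order all_algebra.
From mathcomp Require Import all_classical all_reals all_analysis.
From mathcomp.real_closed Require Import complex.
Import Order.TTheory GRing.Theory Num.Theory.
Import numFieldNormedType.Exports.
Local Open Scope ring_scope.
Local Open Scope classical_set_scope.
Local Open Scope complex_scope.

Set Implicit Arguments. Unset Strict Implicit. Unset Printing Implicit Defensive.

(* The complex numbers over a real field R, viewed as a normed module over
   themselves (so that differentiability over C = holomorphy). *)
Notation CC R := ((R[i])^o).
Notation C2 R := (CC R * CC R)%type.
Notation C3 R := (CC R * CC R * CC R)%type.

Section Defs.
Variable R : realType.

Definition c0 (z : C3 R) : R[i] := z.1.1.
Definition c1 (z : C3 R) : R[i] := z.1.2.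
Definition c2 (z : C3 R) : R[i] := z.2.

Definition mink (z z' : C3 R) : R[i] :=
  c0 z * c0 z' - c1 z * c1 z' - c2 z * c2 z'.

Definition minkR (y y' : 'rV[R]_3) : R :=
  y 0 0 * y' 0 0 - y 0 1 * y' 0 1 - y 0 2%:R * y' 0 2%:R.

Definition reV (z : C3 R) : 'rV[R]_3 :=
  \row_(j < 3) complex.Re (if j == 0 then c0 z else if j == 1 then c1 z else c2 z).
Definition imV (z : C3 R) : 'rV[R]_3 :=
  \row_(j < 3) complex.Im (if j == 0 then c0 z else if j == 1 then c1 z else c2 z).

Definition Xc : set (C3 R) := [set z | mink z z = -1].

Definition Vplus : set 'rV[R]_3 := [set y | 0 < minkR y y /\ 0 < y 0 0].
Definition Vminus : set 'rV[R]_3 := [set y | Vplus (- y)].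

Definition Tplus : set (C3 R) := [set z | Xc z /\ Vplus (imV z)].
Definition Tminus : set (C3 R) := [set z | Xc z /\ Vminus (imV z)].

Definition det3 (e x y : 'rV[R]_3) : R :=
  \det (\matrix_(i < 3, j < 3)
          (if i == 0 then e 0 j else if i == 1 then x 0 j else y 0 j)).

Definition Tright (e : 'rV[R]_3) : set (C3 R) :=
  [set z | Xc z /\ minkR (imV z) (imV z) < 0 /\
           Num.sg (det3 e (reV z) (imV z)) = -1].
Definition Tleft (e : 'rV[R]_3) : set (C3 R) :=
  [set z | Xc z /\ minkR (imV z) (imV z) < 0 /\
           Num.sg (det3 e (reV z) (imV z)) = 1].

Definition zmap (w : C2 R) : C3 R :=
  let l : R[i] := w.1 in let m : R[i] := w.2 in
  ((((1 + l * m) / (l - m) : R[i]) : CC R,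
    ((1 - l * m) / (l - m) : R[i]) : CC R),
   ((l + m) / (l - m) : R[i]) : CC R).

Definition zinv (z : C3 R) : C2 R :=
  (((c0 z - c1 z) / (c2 z - 1) : R[i]) : CC R,
   ((c0 z - c1 z) / (c2 z + 1) : R[i]) : CC R).

(* tubes tau^{eps,eps'} in C^2; eps = true means "+" *)
Definition sgn (b : bool) : R := if b then 1 else -1.
Definition tau (eps eps' : bool) : set (C2 R) :=
  [set w | 0 < sgn eps * complex.Im (w.1 : R[i]) /\ 0 < sgn eps' * complex.Im (w.2 : R[i])].

Definition delta : set (C2 R) := [set w | (w.1 : R[i]) = w.2].

Definition holomorphic_on {V W : normedModType (CC R)} (D : set V) (f : V -> W) :=
  open D /\ forall x, D x -> differentiable f x.

Definition holomorphic_on_sub {W : normedModType (CC R)} (E : set (C3 R))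
    (g : C3 R -> W) :=
  forall z, E z -> exists U : set (C3 R), [/\ open U, U z &
     exists G : C3 R -> W, (forall u, U u -> differentiable G u) /\
                           (forall u, U u -> E u -> G u = g u)].

Definition biholomorphic (D : set (C2 R)) (E : set (C3 R))
    (f : C2 R -> C3 R) (g : C3 R -> C2 R) :=
  [/\ forall w, D w -> E (f w),
      forall z, E z -> D (g z) /\ f (g z) = z,
      forall w, D w -> g (f w) = w,
      holomorphic_on D f &
      holomorphic_on_sub E g].

End Defs.

(* Main.v *)
Require Import Defs.
From HB Require Import structures.
From mathcomp Require Import all_boot all_order all_algebra.
From mathcomp Require Import all_classical all_reals all_analysis.
From mathcomp.real_closed Require Import complex.
From mathcomp Require Import ring lra.
Import Order.TTheory GRing.Theory Num.Theory.
Import numFieldNormedType.Exports.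
Local Open Scope ring_scope.
Local Open Scope classical_set_scope.
Set Implicit Arguments. Unset Strict Implicit.

Ltac canon3 t :=
  let v := eval compute in (nat_of_ord t) in
  match v with 0%N => constr:(0 : 'I_3) | 1%N => constr:(1 : 'I_3) | 2%N => constr:(2%:R : 'I_3) end.
Ltac fixA A :=
 repeat match goal with
 | |- context [fun_of_matrix A ?i ?j] =>
   let i' := canon3 i in let j' := canon3 j in
   (tryif (constr_eq i i'; constr_eq j j') then fail else
     (have -> : A i j = A i' j' by congr (A _ _); apply: val_inj))
 end.
Section S.
Variable R : realType.
Lemma diff_fst (V W : normedModType (CC R)) (x : V * W) : differentiable (@fst V W) x.
Proof.
have := @linear_differentiable (CC R) _ _ (@fst V W : {linear (V * W)%type -> V}) x. apply.
move=> y; exact: cvg_fst.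
Qed.
Lemma diff_snd (V W : normedModType (CC R)) (x : V * W) : differentiable (@snd V W) x.
Proof.
have := @linear_differentiable (CC R) _ _ (@snd V W : {linear (V * W)%type -> W}) x. apply.
move=> y; exact: cvg_snd.
Qed.
Lemma Im_cont : continuous (fun z : CC R => complex.Im (z : R[i])).
Proof.
move=> z.
have := @cvgrPdist_lt R R^o (CC R) (nbhs z) _ (fun z : CC R => complex.Im (z : R[i])) (complex.Im (z : R[i])).
move=> [_ H]; apply: H => eps eps0.
apply/nbhs_ballP; exists (eps%:C)%C => /=.
  by rewrite ltcR.
move=> t; rewrite -ball_normE /= normc_def.
rewrite ltcR => H; apply: le_lt_trans H.
have -> : complex.Im (z - t) = complex.Im z - complex.Im t by case: z; case: t.
rewrite -sqrtr_sqr ler_sqrt ?lerDr ?sqr_ge0 ?addr_ge0 ?sqr_ge0 //.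
Qed.

Lemma open_sgn (b : bool) : open [set x : R | 0 < sgn R b * x].
Proof.
case: b; rewrite /sgn.
  have -> : [set x : R | 0 < 1 * x] = [set x | x > 0].
    by apply/seteqP; split => x /=; rewrite mul1r.
  exact: open_gt.
have -> : [set x : R | 0 < -1 * x] = [set x | x < 0].
  by apply/seteqP; split => x /=; rewrite mulN1r oppr_gt0.
exact: open_lt.
Qed.

Lemma open_tau b b' : open (@tau R b b').
Proof.
apply: openI.
  apply: (@open_comp _ _ (fun w : C2 R => complex.Im (w.1 : R[i])) [set x : R | 0 < sgn R b * x]); last exact: open_sgn.
  move=> w _; apply: continuous_comp; last exact: Im_cont.
  exact/differentiable_continuous/diff_fst.
apply: (@open_comp _ _ (fun w : C2 R => complex.Im (w.2 : R[i])) [set x : R | 0 < sgn R b' * x]); last exact: open_sgn.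
move=> w _; apply: continuous_comp; last exact: Im_cont.
exact/differentiable_continuous/diff_snd.
Qed.

Lemma open_neqC (a : CC R) : open [set x : CC R | x != a].
Proof.
have -> : [set x : CC R | x != a] = ~` [set a].
  by apply/seteqP; split => x /=; move/eqP.
apply: closed_openC; apply: accessible_closed_set1; apply: hausdorff_accessible.
exact: norm_hausdorff.
Qed.

Lemma open_tau_delta b b' : open (@tau R b b' `\` @delta R).
Proof.
apply: openI; first exact: open_tau.
change (open (~` @delta R)).
have -> : ~` @delta R = (fun w : C2 R => (w.1 : CC R) - w.2) @^-1` [set x | x != 0].
  apply/seteqP; split => w /=; rewrite subr_eq0 /delta /=.
    by move=> H; apply/eqP.
  by move/eqP.
apply: open_comp; last exact: open_neqC.
move=> w _; apply: differentiable_continuous.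
apply: differentiableB; [exact: diff_fst| exact: diff_snd].
Qed.

Section Dif.
Variable V : normedModType (CC R).
Implicit Types f g : V -> CC R.
Lemma dM f g x : differentiable f x -> differentiable g x -> differentiable (fun y => f y * g y) x.
Proof. exact: differentiableM. Qed.
Lemma dD f g x : differentiable f x -> differentiable g x -> differentiable (fun y => f y + g y) x.
Proof. exact: differentiableD. Qed.
Lemma dB f g x : differentiable f x -> differentiable g x -> differentiable (fun y => f y - g y) x.
Proof. exact: differentiableB. Qed.
Lemma dV f x : differentiable f x -> f x != 0 -> differentiable (fun y => (f y)^-1) x.
Proof. exact: differentiableV. Qed.
Lemma dC (a : CC R) x : differentiable (fun _ : V => a) x.
Proof. exact: differentiable_cst. Qed.
Lemma dDiv f g x : differentiable f x -> differentiable g x -> g x != 0 -> differentiable (fun y => f y / g y) x.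
Proof. by move=> df dg g0; apply: dM => //; apply: dV. Qed.
End Dif.

Lemma diff_zmap (w : C2 R) : (w.1 : R[i]) != w.2 -> differentiable (@zmap R) w.
Proof.
move=> ne.
have d1 : differentiable (fun w : C2 R => w.1) w by exact: diff_fst.
have d2 : differentiable (fun w : C2 R => w.2) w by exact: diff_snd.
have nz : (w.1 : CC R) - w.2 != 0 by rewrite subr_eq0.
rewrite /zmap; apply: differentiable_pair; first apply: differentiable_pair.
  apply: dDiv; [apply: dD; [exact: dC| exact: dM] | exact: dB | exact: nz].
  apply: dDiv; [apply: dB; [exact: dC| exact: dM] | exact: dB | exact: nz].
apply: dDiv; [exact: dD | exact: dB | exact: nz].
Qed.

Lemma diff_zinv (z : C3 R) : c2 z - 1 != 0 -> c2 z + 1 != 0 -> differentiable (@zinv R) z.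
Proof.
move=> n1 n2.
have d0 : differentiable (fun z : C3 R => (c0 z : CC R)) z.
  apply: (@differentiable_comp _ _ _ _ (fun z : C3 R => z.1) (fun p : C2 R => p.1)); [exact: diff_fst| exact: diff_fst].
have d1 : differentiable (fun z : C3 R => (c1 z : CC R)) z.
  apply: (@differentiable_comp _ _ _ _ (fun z : C3 R => z.1) (fun p : C2 R => p.2)); [exact: diff_fst| exact: diff_snd].
have d2 : differentiable (fun z : C3 R => (c2 z : CC R)) z by exact: diff_snd.
rewrite /zinv; apply: differentiable_pair.
  apply: dDiv; [exact: dB | apply: dB => //; exact: dC | exact: n1].
apply: dDiv; [exact: dB | apply: dD => //; exact: dC | exact: n2].
Qed.
Lemma det3E (A : 'M[R]_3) : \det A =
  A 0 0 * (A 1 1 * A 2%:R 2%:R - A 1 2%:R * A 2%:R 1)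
  - A 0 1 * (A 1 0 * A 2%:R 2%:R - A 1 2%:R * A 2%:R 0)
  + A 0 2%:R * (A 1 0 * A 2%:R 1 - A 1 1 * A 2%:R 0).
Proof.
rewrite (expand_det_row _ 0) !big_ord_recr big_ord0 /= add0r /cofactor.
rewrite !(expand_det_row _ 0) !big_ord_recr big_ord0 /= !add0r /cofactor.
rewrite !det_mx11 !big_ord0 !mxE /=.
fixA A. ring.
Qed.

Definition n0 (x y : 'rV[R]_3) := x 0 1 * y 0 2%:R - x 0 2%:R * y 0 1.
Definition n1 (x y : 'rV[R]_3) := x 0 2%:R * y 0 0 - x 0 0 * y 0 2%:R.
Definition n2 (x y : 'rV[R]_3) := x 0 0 * y 0 1 - x 0 1 * y 0 0.
Lemma det3_n e x y : det3 e x y = e 0 0 * n0 x y + e 0 1 * n1 x y + e 0 2%:R * n2 x y.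
Proof. rewrite /det3 det3E !mxE /= /n0 /n1 /n2; ring. Qed.
Lemma lagrange x y : n0 x y ^+ 2 - n1 x y ^+ 2 - n2 x y ^+ 2 =
   minkR x x * minkR y y - minkR x y ^+ 2.
Proof. rewrite /minkR /n0 /n1 /n2; ring. Qed.
Lemma sign_lemma (e0 e1 e2 m0 m1 m2 : R) : 0 < e0 -> 0 < e0^+2 - e1^+2 - e2^+2 ->
  0 < m0^+2 - m1^+2 - m2^+2 ->
  (0 < m0 -> 0 < e0 * m0 + e1 * m1 + e2 * m2) /\ (m0 < 0 -> e0 * m0 + e1 * m1 + e2 * m2 < 0).
Proof.
move=> he0 he hm.
have cs : (e1 * m1 + e2 * m2) ^+ 2 <= (e1^+2 + e2^+2) * (m1^+2 + m2^+2).
  have := sqr_ge0 (e1 * m2 - e2 * m1); nra.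
have h1 : 0 <= (e0^+2 - e1^+2 - e2^+2) * (m1^+2 + m2^+2).
  apply: mulr_ge0; [lra | exact: addr_ge0 (sqr_ge0 _) (sqr_ge0 _)].
have h2 : 0 < e0^+2 * (m0^+2 - m1^+2 - m2^+2).
  apply: mulr_gt0 => //; exact: exprn_gt0.
split => hm0.
  have p : 0 < e0 * m0 by nra.
  nra.
have p : e0 * m0 < 0 by nra.
nra.
Qed.
Implicit Types x y : R[i].
Notation Re := (@complex.Re R).
Notation Im := (@complex.Im R).
Lemma ReM x y : Re (x * y) = Re x * Re y - Im x * Im y. Proof. by case: x; case: y. Qed.
Lemma ImM x y : Im (x * y) = Re x * Im y + Im x * Re y. Proof. by case: x; case: y. Qed.
Lemma ReD x y : Re (x + y) = Re x + Re y. Proof. by case: x; case: y. Qed.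
Lemma ImD x y : Im (x + y) = Im x + Im y. Proof. by case: x; case: y. Qed.
Lemma ReB x y : Re (x - y) = Re x - Re y. Proof. by case: x; case: y. Qed.
Lemma ImB x y : Im (x - y) = Im x - Im y. Proof. by case: x; case: y. Qed.
Lemma Re1 : Re 1 = 1. Proof. by []. Qed.
Lemma Im1 : Im 1 = 0. Proof. by []. Qed.
Lemma ReV x : Re (x^-1) = Re x / (Re x ^+ 2 + Im x ^+ 2). Proof. by case: x. Qed.
Lemma ImV x : Im (x^-1) = - (Im x / (Re x ^+ 2 + Im x ^+ 2)). Proof. by case: x. Qed.
Lemma eqC x y : Re x = Re y -> Im x = Im y -> x = y.
Proof. by case: x; case: y => /= ? ? ? ? -> ->. Qed.
Definition reC := (ReM, ImM, ReD, ImD, ReB, ImB, Re1, Im1, ReV, ImV).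

Lemma imV0 (z : C3 R) : imV z 0 0 = Im (c0 z). Proof. by rewrite /imV mxE. Qed.
Lemma imV1 (z : C3 R) : imV z 0 1 = Im (c1 z). Proof. by rewrite /imV mxE. Qed.
Lemma imV2 (z : C3 R) : imV z 0 2%:R = Im (c2 z). Proof. by rewrite /imV mxE. Qed.
Lemma reV0 (z : C3 R) : reV z 0 0 = Re (c0 z). Proof. by rewrite /reV mxE. Qed.
Lemma reV1 (z : C3 R) : reV z 0 1 = Re (c1 z). Proof. by rewrite /reV mxE. Qed.
Lemma reV2 (z : C3 R) : reV z 0 2%:R = Re (c2 z). Proof. by rewrite /reV mxE. Qed.

Definition DD (w : C2 R) : R :=
  (Re w.1 - Re w.2) ^+ 2 + (Im w.1 - Im w.2) ^+ 2.

Lemma DD_gt0 (w : C2 R) : (w.1 : R[i]) != w.2 -> 0 < DD w.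
Proof.
move=> ne; rewrite /DD lt_neqAle addr_ge0 ?sqr_ge0 // andbT.
apply/negP => /eqP H; apply/negP: ne; apply/negPn/eqP.
have g1 := sqr_ge0 (Re w.1 - Re w.2); have g2 := sqr_ge0 (Im w.1 - Im w.2).
have h1 : (Re w.1 - Re w.2) ^+ 2 = 0 by lra.
have h2 : (Im w.1 - Im w.2) ^+ 2 = 0 by lra.
apply: eqC; apply/eqP; rewrite -subr_eq0 -sqrf_eq0; apply/eqP => //.
Qed.

Lemma K1 (w : C2 R) : (w.1 : R[i]) != w.2 ->
  minkR (imV (zmap w)) (imV (zmap w)) = - 4 * Im w.1 * Im w.2 / DD w.
Proof.
move=> ne; have := @DD_gt0 w ne; rewrite /DD.
rewrite /minkR imV0 imV1 imV2 /c0 /c1 /c2 /zmap /=.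
case: w ne => [[a b] [c d]] /= ne D0.
have Dn : (a - c) ^+ 2 + (b - d) ^+ 2 != 0 by rewrite gt_eqF.
by field.
Qed.

Lemma K2 (w : C2 R) : (w.1 : R[i]) != w.2 ->
  imV (zmap w) 0 0 + imV (zmap w) 0 1 = - 2 * (Im w.1 - Im w.2) / DD w.
Proof.
move=> ne; have := @DD_gt0 w ne; rewrite /DD.
rewrite imV0 imV1 /c0 /c1 /c2 /zmap /=.
case: w ne => [[a b] [c d]] /= ne D0.
have Dn : (a - c) ^+ 2 + (b - d) ^+ 2 != 0 by rewrite gt_eqF.
by field.
Qed.

Lemma K3 (w : C2 R) : (w.1 : R[i]) != w.2 ->
  reV (zmap w) 0 1 * imV (zmap w) 0 2%:R - reV (zmap w) 0 2%:R * imV (zmap w) 0 1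
  = (Im w.1 * (1 + Re w.2 ^+ 2 + Im w.2 ^+ 2) + Im w.2 * (1 + Re w.1 ^+ 2 + Im w.1 ^+ 2)) / DD w.
Proof.
move=> ne; have := @DD_gt0 w ne; rewrite /DD.
rewrite imV1 imV2 reV1 reV2 /c0 /c1 /c2 /zmap /=.
case: w ne => [[a b] [c d]] /= ne D0.
have Dn : (a - c) ^+ 2 + (b - d) ^+ 2 != 0 by rewrite gt_eqF.
by field.
Qed.

Lemma Xc_zmap (w : C2 R) : (w.1 : R[i]) != w.2 -> Xc (zmap w).
Proof.
case: w => l m /= ne; rewrite /Xc /mink /c0 /c1 /c2 /zmap /=.
have ne' : (l : R[i]) - m != 0 by rewrite subr_eq0.
by field.
Qed.

Lemma zinv_zmap (w : C2 R) : (w.1 : R[i]) != w.2 -> (w.1 : R[i]) != 0 -> (w.2 : R[i]) != 0 ->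
  zinv (zmap w) = w.
Proof.
case: w => l m /= ne l0 m0; rewrite /zinv /c0 /c1 /c2 /zmap /=.
have ne' : (l : R[i]) - m != 0 by rewrite subr_eq0.
have two : (2 : R[i]) != 0 by rewrite pnatr_eq0.
congr (_, _); field; rewrite ne' /=.
  have -> : l + m + -1 * (l - m) = 2 * m by ring.
  by rewrite mulf_neq0.
have -> : l + m + (l - m) = 2 * l by ring.
by rewrite mulf_neq0.
Qed.

Lemma zmap_zinv (z : C3 R) : Xc z -> c0 z + c1 z != 0 -> c2 z - 1 != 0 -> c2 z + 1 != 0 ->
  zmap (zinv z) = z.
Proof.
case: z => [[z0 z1] z2]; rewrite /Xc /mink /c0 /c1 /c2 /zmap /zinv /=.
move=> X q0 n1 n2.
have two : (2 : R[i]) != 0 by rewrite pnatr_eq0.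
have Z2 : z2 * z2 = z0 * z0 - z1 * z1 + 1.
  apply/eqP; rewrite -subr_eq0; apply/eqP.
  transitivity (-(z0*z0 - z1*z1 - z2*z2) - 1); first ring.
  by rewrite X; ring.
set q := z0 + z1 in q0 *.
have Eq : z0 + z1 = q by [].
clearbody q.
have E0 : z0 = (q ^+ 2 + z2 ^+ 2 - 1) / (2 * q).
  apply: (mulIf (mulf_neq0 two q0)).
  rewrite divfK ?mulf_neq0 // -Eq !expr2 Z2; ring.
have E1 : z1 = (q ^+ 2 - z2 ^+ 2 + 1) / (2 * q).
  apply: (mulIf (mulf_neq0 two q0)).
  rewrite divfK ?mulf_neq0 // -Eq !expr2 Z2; ring.
rewrite E0 E1.
have P0 : z2 ^+ 2 - 1 != 0.
  have -> : z2 ^+ 2 - 1 = (z2 - 1) * (z2 + 1) by ring.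
  by rewrite mulf_neq0.
have H4 : (q ^+ 2 + z2 ^+ 2 - 1 - (q ^+ 2 - z2 ^+ 2 + 1)) * (z2 + 1) +
      - (q ^+ 2 + z2 ^+ 2 - 1 - (q ^+ 2 - z2 ^+ 2 + 1)) * (z2 - 1) = 4 * (z2 ^+ 2 - 1) by ring.
have four : (4 : R[i]) != 0 by rewrite pnatr_eq0.
congr (_, _, _); rewrite /c0 /c1 /c2 /=; field; by rewrite q0 n1 n2 H4 mulf_neq0.
Qed.


Lemma XcR (z : C3 R) : Xc z ->
  minkR (reV z) (reV z) - minkR (imV z) (imV z) = -1 /\ minkR (reV z) (imV z) = 0.
Proof.
rewrite /Xc /mink /minkR imV0 imV1 imV2 reV0 reV1 reV2 /c0 /c1 /c2.
case: z => [[[a0 b0] [a1 b1]] [a2 b2]] /= [E1 E2].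
split; [lra | lra].
Qed.

Lemma Xc_fact (z : C3 R) : Xc z -> (c0 z - c1 z) * (c0 z + c1 z) = (c2 z - 1) * (c2 z + 1).
Proof.
rewrite /Xc /mink => X.
transitivity (c0 z * c0 z - c1 z * c1 z - c2 z * c2 z + c2 z * c2 z); first ring.
rewrite X; ring.
Qed.

Lemma NZ (z : C3 R) : Xc z -> minkR (imV z) (imV z) != 0 ->
  [/\ c0 z - c1 z != 0, c0 z + c1 z != 0, c2 z - 1 != 0 & c2 z + 1 != 0].
Proof.
move=> X ny; have F := Xc_fact X.
have A : (c2 z - 1) * (c2 z + 1) != 0.
  apply/eqP => H0.
  have I2 : Im (c2 z) = 0.
    move/eqP: H0; rewrite mulf_eq0 => /orP[]; rewrite ?subr_eq0 ?addr_eq0 => /eqP -> //.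
    by rewrite /= oppr0.
  move: H0; rewrite -F => /eqP; rewrite mulf_eq0 => /orP[] /eqP H.
    have I0 : Im (c0 z) = Im (c1 z).
      by have := congr1 (@complex.Im R) H; rewrite ImB /= => /eqP; rewrite subr_eq0 => /eqP.
    by move: ny; rewrite /minkR imV0 imV1 imV2 I0 I2 mulr0 !subrr eqxx.
  have I0 : Im (c0 z) = - Im (c1 z).
    by have := congr1 (@complex.Im R) H; rewrite ImD /= => /eqP; rewrite addr_eq0 => /eqP.
  by move: ny; rewrite /minkR imV0 imV1 imV2 I0 I2 mulr0 mulrNN !subrr eqxx.
move: (A); rewrite -F !mulf_eq0 negb_or => /andP[-> ->].
by move: A; rewrite mulf_eq0 negb_or => /andP[-> ->].
Qed.

Lemma zmap_diag (w : C2 R) : (w.1 : R[i]) = w.2 -> zmap w = (0, 0, 0).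
Proof. by case: w => l m /= ->; rewrite /zmap /= subrr invr0 !mulr0. Qed.

Lemma not_Xc0 : ~ Xc ((0, 0, 0) : C3 R).
Proof.
rewrite /Xc /mink /c0 /c1 /c2 /= !mulr0 !subr0 => /eqP.
by rewrite eq_sym oppr_eq0 oner_eq0.
Qed.

Lemma det_sign (e x y : 'rV[R]_3) : Vplus e ->
  0 < minkR x x * minkR y y - minkR x y ^+ 2 ->
  (0 < n0 x y -> 0 < det3 e x y) /\ (n0 x y < 0 -> det3 e x y < 0).
Proof.
move=> [he he0] N; rewrite det3_n.
apply: (@sign_lemma (e 0 0) (e 0 1) (e 0 2%:R) (n0 x y) (n1 x y) (n2 x y)) => //.

by rewrite lagrange.
Qed.

Lemma sg1 (x : R) : Num.sg x = 1 -> 0 < x.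
Proof. by move=> h; rewrite -sgr_gt0 h ltr01. Qed.
Lemma sgN1 (x : R) : Num.sg x = -1 -> x < 0.
Proof. by move=> h; rewrite -sgr_lt0 h ltrN10. Qed.

Lemma mem_T (w : C2 R) : (w.1 : R[i]) != w.2 ->
  let y0 := imV (zmap w) 0 0 in let y1 := imV (zmap w) 0 1 in
  let y2 := imV (zmap w) 0 2%:R in
  (y0 * y0 - y1 * y1 - y2 * y2) * DD w = - 4 * Im w.1 * Im w.2 /\
  (y0 + y1) * DD w = - 2 * (Im w.1 - Im w.2) /\
  n0 (reV (zmap w)) (imV (zmap w)) * DD w =
    Im w.1 * (1 + Re w.2 ^+ 2 + Im w.2 ^+ 2) + Im w.2 * (1 + Re w.1 ^+ 2 + Im w.1 ^+ 2).
Proof.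
move=> ne /=; have Dp := DD_gt0 ne.
have Dn : DD w != 0 by rewrite gt_eqF.
have k1 := K1 ne; have k2 := K2 ne; have k3 := K3 ne.
rewrite /minkR in k1; rewrite /n0 k3 k2 k1.
by split; [|split]; rewrite divfK.
Qed.

Lemma plus_logic (y0 y1 y2 D b d : R) : 0 < D ->
  (y0 * y0 - y1 * y1 - y2 * y2) * D = -4 * b * d -> (y0 + y1) * D = -2 * (b - d) ->
  ((0 < y0 * y0 - y1 * y1 - y2 * y2 /\ 0 < y0) <-> (b < 0 /\ 0 < d)).
Proof.
move=> Dp k1 k2; split.
  move=> [hy hy0].
  have bd : b * d < 0 by nra.
  have s : 0 < y0 + y1 by nra.
  have bd2 : b < d by nra.
  split; nra.
move=> [hb hd].
have hy : 0 < y0 * y0 - y1 * y1 - y2 * y2 by nra.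
split => //.
have s : 0 < y0 + y1 by nra.
nra.
Qed.

Lemma minus_logic (y0 y1 y2 D b d : R) : 0 < D ->
  (y0 * y0 - y1 * y1 - y2 * y2) * D = -4 * b * d -> (y0 + y1) * D = -2 * (b - d) ->
  ((0 < y0 * y0 - y1 * y1 - y2 * y2 /\ y0 < 0) <-> (0 < b /\ d < 0)).
Proof.
move=> Dp k1 k2; split.
  move=> [hy hy0].
  have bd : b * d < 0 by nra.
  have s : y0 + y1 < 0 by nra.
  have bd2 : d < b by nra.
  split; nra.
move=> [hb hd].
have hy : 0 < y0 * y0 - y1 * y1 - y2 * y2 by nra.
split => //.
have s : y0 + y1 < 0 by nra.
nra.
Qed.

Lemma mem_Tplus (w : C2 R) : (w.1 : R[i]) != w.2 ->
  (Tplus (zmap w) <-> (Im w.1 < 0 /\ 0 < Im w.2)).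
Proof.
move=> ne; have Dp := DD_gt0 ne; have X := Xc_zmap ne.
have [k1 [k2 _]] := mem_T ne.
have L := plus_logic Dp k1 k2.
rewrite /Tplus /Vplus /minkR /=; split.
  by move=> [_ H]; apply/L.
by move=> H; split => //; apply/L.
Qed.

Lemma oppV (y : 'rV[R]_3) : minkR (- y) (- y) = minkR y y /\ (- y) 0 0 = - y 0 0.
Proof. by rewrite /minkR !mxE; split => //; ring. Qed.

Lemma mem_Tminus (w : C2 R) : (w.1 : R[i]) != w.2 ->
  (Tminus (zmap w) <-> (0 < Im w.1 /\ Im w.2 < 0)).
Proof.
move=> ne; have Dp := DD_gt0 ne; have X := Xc_zmap ne.
have [k1 [k2 _]] := mem_T ne.
have L := minus_logic Dp k1 k2.
rewrite /Tminus /Vminus /Vplus /=; have [-> ->] := oppV (imV (zmap w)).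
rewrite oppr_gt0 /minkR; split.
  by move=> [_ H]; apply/L.
by move=> H; split => //; apply/L.
Qed.

Lemma lr_logic (ysq D b d n A B : R) : 0 < D -> 0 < A -> 0 < B ->
  ysq * D = -4 * b * d -> n * D = b * A + d * B ->
  ((ysq < 0 /\ 0 < n) <-> (0 < b /\ 0 < d)) /\ ((ysq < 0 /\ n < 0) <-> (b < 0 /\ d < 0)).
Proof.
move=> Dp Ap Bp k1 k3; split; split.
- move=> [hy hn].
  have bd : 0 < b * d by nra.
  have bA : 0 < b * A + d * B by nra.
  case: (ltrgtP b 0) => hb.
  + have hd : d < 0 by nra.
    have : b * A < 0 by nra.
    have : d * B < 0 by nra.
    lra.
  + split => //; nra.
  + by move: bd; rewrite hb mul0r ltxx.
- move=> [hb hd]; split; nra.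
- move=> [hy hn].
  have bd : 0 < b * d by nra.
  have bA : b * A + d * B < 0 by nra.
  case: (ltrgtP b 0) => hb.
  + split => //; nra.
  + have hd : 0 < d by nra.
    have : 0 < b * A by nra.
    have : 0 < d * B by nra.
    lra.
  + by move: bd; rewrite hb mul0r ltxx.
- move=> [hb hd]; split; nra.
Qed.

Lemma sgdet (e : 'rV[R]_3) (z : C3 R) : Vplus e -> Xc z -> minkR (imV z) (imV z) < 0 ->
  (Num.sg (det3 e (reV z) (imV z)) = 1 <-> 0 < n0 (reV z) (imV z)) /\
  (Num.sg (det3 e (reV z) (imV z)) = -1 <-> n0 (reV z) (imV z) < 0).
Proof.
move=> he X hy; have [xr xy] := XcR X.
have N : 0 < minkR (reV z) (reV z) * minkR (imV z) (imV z) - minkR (reV z) (imV z) ^+ 2.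
  rewrite xy expr0n /= subr0.
  have -> : minkR (reV z) (reV z) = minkR (imV z) (imV z) - 1 by lra.
  nra.
have [DP DN] := det_sign he N.
have nz : n0 (reV z) (imV z) != 0.
  apply/eqP => h; move: N; rewrite -lagrange h expr0n /= sub0r.
  have := sqr_ge0 (n1 (reV z) (imV z)); have := sqr_ge0 (n2 (reV z) (imV z)); lra.
split; split.
- move=> /sg1 hd; case: (ltrgtP (n0 (reV z) (imV z)) 0) => // hn.
    by have := DN hn; lra.
  by move: nz; rewrite hn eqxx.
- by move=> hn; apply: gtr0_sg; exact: DP.
- move=> /sgN1 hd; case: (ltrgtP (n0 (reV z) (imV z)) 0) => // hn.
    by have := DP hn; lra.
  by move: nz; rewrite hn eqxx.
- by move=> hn; apply: ltr0_sg; exact: DN.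
Qed.

Lemma mem_LR (e : 'rV[R]_3) (w : C2 R) : Vplus e -> (w.1 : R[i]) != w.2 ->
  (Tleft e (zmap w) <-> (0 < Im w.1 /\ 0 < Im w.2)) /\
  (Tright e (zmap w) <-> (Im w.1 < 0 /\ Im w.2 < 0)).
Proof.
move=> he ne; have Dp := DD_gt0 ne; have X := Xc_zmap ne.
have [_ [_ k3]] := mem_T ne.
have k1 : minkR (imV (zmap w)) (imV (zmap w)) * DD w = -4 * Im w.1 * Im w.2.
  by rewrite K1 // divfK // gt_eqF.
have Ap : 0 < 1 + Re w.2 ^+ 2 + Im w.2 ^+ 2.
  have := sqr_ge0 (Re w.2); have := sqr_ge0 (Im w.2); lra.
have Bp : 0 < 1 + Re w.1 ^+ 2 + Im w.1 ^+ 2.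
  have := sqr_ge0 (Re w.1); have := sqr_ge0 (Im w.1); lra.
have [L1 L2] := lr_logic Dp Ap Bp k1 k3.
rewrite /Tleft /Tright /=; split; split.
- move=> [_ [hy hs]]; apply/L1; split => //.
  by have [[S1 _] _] := sgdet he X hy; apply: S1.
- move=> H; have [hy hn] := L1.2 H; split => //; split => //.
  by have [[_ S1] _] := sgdet he X hy; apply: S1.
- move=> [_ [hy hs]]; apply/L2; split => //.
  by have [_ [S1 _]] := sgdet he X hy; apply: S1.
- move=> H; have [hy hn] := L2.2 H; split => //; split => //.
  by have [_ [_ S1]] := sgdet he X hy; apply: S1.
Qed.

Lemma biholo_gen (P : R -> R -> Prop) (D : set (C2 R)) (E : set (C3 R)) :
  open D ->
  (forall w, D w <-> ((w.1 : R[i]) != w.2 /\ P (Im w.1) (Im w.2))) ->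
  (forall b d, P b d -> b != 0 /\ d != 0) ->
  (forall w, (w.1 : R[i]) != w.2 -> (E (zmap w) <-> P (Im w.1) (Im w.2))) ->
  (forall z, E z -> Xc z /\ minkR (imV z) (imV z) != 0) ->
  biholomorphic D E (@zmap R) (@zinv R).
Proof.
move=> oD HD HP HE HEz; split.
- by move=> w /HD [ne p]; apply/(HE w ne).
- move=> z Ez; have [X ny] := HEz z Ez.
  have [n01 n02 n1 n2] := NZ X ny.
  have ZZ := zmap_zinv X n02 n1 n2.
  have ne : ((zinv z).1 : R[i]) != (zinv z).2.
    apply/eqP => eq; have := zmap_diag eq; rewrite ZZ => z0.
    by apply: not_Xc0; rewrite -z0.
  split => //; apply/HD; split => //; apply/(HE _ ne); rewrite ZZ.
  exact: Ez.
- move=> w /HD [ne p]; have [b0 d0] := HP _ _ p; apply: zinv_zmap => //.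
    by apply/eqP => h; move: b0; rewrite h eqxx.
  by apply/eqP => h; move: d0; rewrite h eqxx.
- by split => // w /HD [ne _]; exact: diff_zmap.
- move=> z Ez; have [X ny] := HEz z Ez; have [_ _ n1 n2] := NZ X ny.
  have d2 : forall u : C3 R, differentiable (fun z : C3 R => (c2 z : CC R)) u by move=> u; exact: diff_snd.
  exists [set u | (c2 u : CC R) - 1 != 0 /\ (c2 u : CC R) + 1 != 0]; split => //.
    apply: openI.
      apply: (@open_comp _ _ (fun u : C3 R => (c2 u : CC R) - 1) [set x | x != 0]); last exact: open_neqC.
      by move=> u _; apply: differentiable_continuous; apply: dB => //; exact: dC.
    apply: (@open_comp _ _ (fun u : C3 R => (c2 u : CC R) + 1) [set x | x != 0]); last exact: open_neqC.
    by move=> u _; apply: differentiable_continuous; apply: dD => //; exact: dC.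
  exists (@zinv R); split => //.
  by move=> u [u1 u2]; exact: diff_zinv.
Qed.

End S.

Unset Implicit Arguments. Set Strict Implicit.

Theorem proposition7 (R : realType) (e : 'rV[R]_3) (he : Vplus e) :
  (* the two expressions of the inverse agree on X^(c) images *)
  (forall z : C3 R, (@Tplus R z \/ @Tminus R z \/ Tleft e z \/ Tright e z) ->
     zinv z = ((((c2 z + 1) / (c0 z + c1 z) : R[i]) : CC R),
               (((c2 z - 1) / (c0 z + c1 z) : R[i]) : CC R))) /\
  [/\ biholomorphic (@tau R false true) (@Tplus R) (@zmap R) (@zinv R),
      biholomorphic (@tau R true false) (@Tminus R) (@zmap R) (@zinv R),
      biholomorphic (@tau R true true `\` @delta R) (Tleft e) (@zmap R) (@zinv R) &
      biholomorphic (@tau R false false `\` @delta R) (Tright e) (@zmap R) (@zinv R)].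
Proof.
have HT : forall z : C3 R, (@Tplus R z \/ @Tminus R z \/ Tleft e z \/ Tright e z) ->
    Xc z /\ minkR (imV z) (imV z) != 0.
  move=> z [[X [hy _]]|[[X]|[[X [hy _]]|[X [hy _]]]]].
  - by split => //; rewrite gt_eqF.
  - have [E0 _] := oppV (imV z); rewrite /Vminus /Vplus /= E0 => -[hy _].
    by split => //; rewrite gt_eqF.
  - by split => //; rewrite lt_eqF.
  - by split => //; rewrite lt_eqF.
split.
  move=> z /HT [X ny]; have [n01 n02 n1 n2] := NZ X ny.
  have F := Xc_fact X.
  rewrite /zinv; congr (_, _); apply/eqP; rewrite eqr_div //; apply/eqP.
    by rewrite F mulrC.
  by rewrite F.
have sg_neq0 : forall (b : bool) (x : R), 0 < sgn R b * x -> x != 0.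
  by move=> b x; apply: contraTneq => ->; rewrite mulr0 ltxx.
split.
- apply: (@biholo_gen R (fun b d => b < 0 /\ 0 < d)).
  + exact: open_tau.
  + move=> w; rewrite /tau /sgn /= mulN1r oppr_gt0 mul1r; split.
      move=> [hb hd]; split => //; apply/eqP => h; move: hb; rewrite h; lra.
    by move=> [].
  + by move=> b d [hb hd]; rewrite lt_eqF // gt_eqF.
  + move=> w ne; exact: mem_Tplus.
  + by move=> z H; apply: HT; left.
- apply: (@biholo_gen R (fun b d => 0 < b /\ d < 0)).
  + exact: open_tau.
  + move=> w; rewrite /tau /sgn /= mulN1r oppr_gt0 mul1r; split.
      move=> [hb hd]; split => //; apply/eqP => h; move: hb; rewrite h; lra.
    by move=> [].
  + by move=> b d [hb hd]; rewrite gt_eqF // lt_eqF.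
  + move=> w ne; exact: mem_Tminus.
  + by move=> z H; apply: HT; right; left.
- apply: (@biholo_gen R (fun b d => 0 < b /\ 0 < d)).
  + exact: open_tau_delta.
  + move=> w; rewrite /tau /sgn /delta /= !mul1r; split.
      by move=> [[hb hd] nd]; split => //; apply/eqP.
    by move=> [/eqP ne [hb hd]].
  + by move=> b d [hb hd]; rewrite !gt_eqF.
  + move=> w ne; exact: (mem_LR he ne).1.
  + by move=> z H; apply: HT; right; right; left.
- apply: (@biholo_gen R (fun b d => b < 0 /\ d < 0)).
  + exact: open_tau_delta.
  + move=> w; rewrite /tau /sgn /delta /= !mulN1r !oppr_gt0; split.
      by move=> [[hb hd] nd]; split => //; apply/eqP.
    by move=> [/eqP ne [hb hd]].
  + by move=> b d [hb hd]; rewrite !lt_eqF.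
  + move=> w ne; exact: (mem_LR he ne).2.
  + by move=> z H; apply: HT; right; right; right.
Qed.
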